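(* Consider a system of $k$ parallel $M/M/1$ queues, each with finite capacity $C'$, arrival rate $\mu$ and service rate $\lambda$ per server, where arriving customers join a queue of currently shortest length and are turned away if all queues are full. Let $\epsilon_{n_1, \ldots, n_k}$ be the steady-state probability that there are $n_i$ people in queue $i$ for $i \in \{1, \ldots, k\}$, and let $\zeta_{m_0, m_1, \ldots, m_{C'}}$ be the steady-state probability that there are $m_j$ queues with exactly $j$ customers, for $j \in \{0, 1, \ldots, C'\}$, so that $$\epsilon_{n_1, \ldots, n_k} = \frac{1}{\binom{k}{m_0, \ldots, m_{C'}}} \zeta_{m_0, \ldots, m_{C'}}$$ if $m_j = \sum_{i = 1}^k \mathbf{1}\{n_i = j \}$ for all $j \in \{0, \ldots, C'\}$. Then the $\zeta$ steady-state probabilities satisfy $$\Big(\mathbf{1}\{m_{C'} < k\}\frac{\mu}{\lambda} + (k - m_0) \Big) \zeta_{m_0, m_1, \ldots, m_{C'}} = \sum_{i = 1}^{C'} (m_i + 1) \zeta_{m_0, \ldots, m_{i-2}, m_{i-1} - 1, m_i + 1, \ldots, m_{C'}} + \frac{\mu}{\lambda} \big[\zeta_{m_0 + 1, m_1 - 1, m_2, \ldots, m_{C'}} + \zeta_{0, m_1 + 1, m_2 - 1, \ldots, m_{C'}} + \cdots + \zeta_{0, \ldots, 0, m_{C'-1} + 1, m_{C'} - 1} \big],$$ with $\zeta_{m_0, \ldots, m_{C'}} = 0$ unless $\sum_{j = 0}^{C'} m_j = k$ and $m_j \in \{0, \ldots, k\}$ for all $j$.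
   Context: $\binom{k}{m_0,\ldots,m_{C'}}=\frac{k!}{m_0!\cdots m_{C'}!}$ is the multinomial coefficient. The capacity $C'$ of each queue includes the customer being served. Arrivals form a Poisson process of rate $\mu$; each server has exponential service times with rate $\lambda$. *)

(* Defs.v *)
From mathcomp Require Import all_boot all_order all_algebra.
Set Implicit Arguments. Unset Strict Implicit. Unset Printing Implicit Defensive.
Import Order.TTheory GRing.Theory Num.Theory.
Local Open Scope ring_scope.

Definition state (k C : nat) := {ffun 'I_k -> 'I_C.+1}.

Definition shortest (k C : nat) (n : state k C) (i : 'I_k) : bool :=
  [forall j, (n i <= n j)%N].

Definition nshort (k C : nat) (n : state k C) : nat :=
  #|[set i | shortest n i]|.

Definition is_upd (k C : nat) (n n' : state k C) (i : 'I_k) (d : int) : bool :=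
  [forall j, ((n' j : nat)%:Z == (n j : nat)%:Z + (if j == i then d else 0))].

(* transition rate from n to n' (n' <> n) of the CTMC:
   arrival to a shortest, non-full queue i at rate mu / #shortest
   (customers are turned away when all queues are full),
   departure from a nonempty queue i at rate lam. *)
Definition rate (R : numFieldType) (k C : nat) (mu lam : R) (n n' : state k C) : R :=
  \sum_(i < k)
     ((is_upd n n' i 1)%:R *
        (if shortest n i && (n i < C)%N then mu / (nshort n)%:R else 0)
    + (is_upd n n' i (-1))%:R * lam).

Definition jsq_stationary (R : numFieldType) (k C : nat) (mu lam : R)
    (eps : state k C -> R) : Prop :=
  (forall n, 0 <= eps n) /\ (\sum_n eps n = 1) /\
  (forall n, eps n * (\sum_(n' | n' != n) rate mu lam n n')
             = \sum_(n' | n' != n) eps n' * rate mu lam n' n).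

Definition occ (k C : nat) (n : state k C) (j : 'I_C.+1) : nat :=
  #|[set i | n i == j]|.

(* zeta_m = probability that there are m j queues with exactly j customers;
   indices are integers, so zeta_m = 0 automatically unless every m j is in
   0..k and they sum to k *)
Definition zeta (R : numFieldType) (k C : nat) (eps : state k C -> R)
    (m : 'I_C.+1 -> int) : R :=
  \sum_(n | [forall j, (occ n j)%:Z == m j]) eps n.

(* Main.v *)
Require Import Defs.
From mathcomp Require Import all_boot all_order all_algebra zify ring.
Set Implicit Arguments. Unset Strict Implicit. Unset Printing Implicit Defensive.
Import Order.TTheory GRing.Theory Num.Theory.
Local Open Scope ring_scope.

Definition upd (k C : nat) (n : state k C) (i : 'I_k) (w : 'I_C.+1) : state k C :=
  [ffun l => if l == i then w else n l].

Lemma is_upd_inc (k C : nat) (n n' : state k C) i :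
  is_upd n n' i 1 = (n i < C)%N && (n' == upd n i (inord (n i).+1)).
Proof.
apply/idP/idP.
- move/forallP => H; have Hi := H i; rewrite eqxx in Hi.
  have Hlt : (n i < C)%N by move/eqP: Hi; have := ltn_ord (n' i); lia.
  rewrite Hlt /=; apply/eqP/ffunP => j; rewrite ffunE; case: eqP => [->|ne].
    by apply/val_inj; rewrite /= inordK //; move/eqP: Hi; lia.
  apply/val_inj => /=; have := H j; rewrite (introF eqP ne) addr0 => /eqP; lia.
- case/andP => lt /eqP ->; apply/forallP => j; rewrite ffunE; case: (j =P i) => [->|ne].
    by rewrite inordK //; apply/eqP; lia.
  by rewrite addr0.
Qed.

Lemma is_upd_dec (k C : nat) (n n' : state k C) i :
  is_upd n n' i (-1) = (0 < n i)%N && (n' == upd n i (inord (n i).-1)).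
Proof.
apply/idP/idP.
- move/forallP => H; have Hi := H i; rewrite eqxx in Hi.
  have Hlt : (0 < n i)%N by move/eqP: Hi; lia.
  rewrite Hlt /=; apply/eqP/ffunP => j; rewrite ffunE; case: eqP => [->|ne].
    apply/val_inj; rewrite /= inordK //; move/eqP: Hi; have := ltn_ord (n i); lia.
  apply/val_inj => /=; have := H j; rewrite (introF eqP ne) addr0 => /eqP; lia.
- case/andP => lt /eqP ->; apply/forallP => j; rewrite ffunE; case: (j =P i) => [->|ne].
    rewrite inordK; first by apply/eqP; lia.
    have := ltn_ord (n i); lia.
  by rewrite addr0.
Qed.

Lemma occ_upd (k C : nat) (n : state k C) i w (l : 'I_C.+1) :
  (occ (upd n i w) l + (n i == l) = occ n l + (w == l))%N.
Proof.
rewrite /occ (cardsD1 i [set j | upd n i w j == l]) (cardsD1 i [set j | n j == l]).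
rewrite !inE ffunE eqxx.
have -> : [set j | upd n i w j == l] :\ i = [set j | n j == l] :\ i.
  apply/setP => j; rewrite !inE ffunE; by case: eqP.
lia.
Qed.

Lemma sum_ind (R : nzRingType) (T : finType) (x : T) (b : bool) (F : T -> R) :
  \sum_y (b && (y == x))%:R * F y = b%:R * F x.
Proof.
rewrite (bigD1 x) //= eqxx andbT big1 ?addr0 // => y /negbTE ->.
by rewrite andbF mul0r.
Qed.

Lemma sum_ind1 (R : nzRingType) (T : finType) (x : T) (F : T -> R) :
  \sum_y (y == x)%:R * F y = F x.
Proof. by have := sum_ind x true F; rewrite mul1r. Qed.

Lemma sumb (R : nzRingType) (T : finType) (b : pred T) :
  \sum_(i : T) (b i)%:R = #|[set i | b i]|%:R :> R.
Proof.
rewrite -natr_sum; congr _%:R; rewrite -sum1_card [RHS]big_mkcond /=.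
by apply: eq_bigr => i _; rewrite inE; case: (b i).
Qed.

Definition Arate (R : numFieldType) (k C : nat) (mu : R) (n : state k C) (i : 'I_k) : R :=
  if shortest n i && (n i < C)%N then mu / (nshort n)%:R else 0.

Definition inc (k C : nat) (n : state k C) i := upd n i (inord (n i).+1).
Definition dec (k C : nat) (n : state k C) i := upd n i (inord (n i).-1).

Lemma rateE (R : numFieldType) (k C : nat) (mu lam : R) (n n' : state k C) :
  rate mu lam n n' = \sum_i (((n i < C)%N && (n' == inc n i))%:R * Arate mu n i
                           + ((0 < n i)%N && (n' == dec n i))%:R * lam).
Proof. by apply: eq_bigr => i _; rewrite is_upd_inc is_upd_dec. Qed.

Lemma rate_self (R : numFieldType) (k C : nat) (mu lam : R) (n : state k C) :
  rate mu lam n n = 0.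
Proof.
rewrite /rate big1 // => i _.
have -> : is_upd n n i 1 = false.
  by apply/negP => /forallP/(_ i); rewrite eqxx => /eqP; lia.
have -> : is_upd n n i (-1) = false.
  by apply/negP => /forallP/(_ i); rewrite eqxx => /eqP; lia.
by rewrite !mul0r addr0.
Qed.

Lemma sum_neq (R : numFieldType) (T : finType) (x : T) (F : T -> R) :
  F x = 0 -> \sum_(y | y != x) F y = \sum_y F y.
Proof. by move=> H; rewrite [RHS](bigD1 x) //= H add0r. Qed.

Lemma occ_sum (k C : nat) (n : state k C) : (\sum_l occ n l)%N = k.
Proof.
have -> : (\sum_l occ n l = \sum_l \sum_i (n i == l))%N.
  apply: eq_bigr => l _; rewrite /occ -sum1_card big_mkcond /=.
  by apply: eq_bigr => i _; rewrite inE; case: (n i == l).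
rewrite exchange_big /=; transitivity (\sum_(i < k) 1)%N; last first.
  by rewrite sum1_card card_ord.
apply: eq_bigr => i _; rewrite (bigD1 (n i)) //= eqxx big1 ?addn0 // => l /negbTE.
by rewrite eq_sym => ->.
Qed.

Lemma exists_min (k C : nat) (n : state k C) (i0 : 'I_k) :
  exists i, forall j, (n i <= n j)%N.
Proof.
case: (@arg_minnP _ i0 predT (fun i => nat_of_ord (n i)) isT) => i _ H.
by exists i => j; exact: H.
Qed.

Lemma outrate (R : numFieldType) (k C : nat) (mu lam : R) (n : state k C) :
  \sum_n' rate mu lam n n' =
  ((occ n ord_max < k)%N)%:R * mu + (k - occ n ord0)%:R * lam.
Proof.
under eq_bigr do rewrite rateE.
rewrite exchange_big /=.
under eq_bigr do rewrite big_split /= sum_ind sum_ind.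
rewrite big_split /=; congr (_ + _).
- case: (boolP [exists i, (n i < C)%N]) => [/existsP [i0 Hi0]|].
  + have Hk : (occ n ord_max < k)%N.
      rewrite /occ; have := cardsC [set i | n i == ord_max]; rewrite card_ord.
      have : (0 < #|~: [set i | n i == ord_max]|)%N.
        apply/card_gt0P; exists i0; rewrite !inE -val_eqE /=; lia.
      lia.
    rewrite Hk mul1r.
    have [i1 Hi1] := exists_min n i0.
    have Hsh : (0 < nshort n)%N.
      apply/card_gt0P; exists i1; rewrite inE; exact/forallP.
    have -> : \sum_i ((n i < C)%N)%:R * Arate mu n i =
              \sum_(i in [set i | shortest n i]) mu / (nshort n)%:R.
      rewrite [RHS]big_mkcond /=; apply: eq_bigr => i _; rewrite inE /Arate.
      case: (boolP (shortest n i)) => /= Hs; last by rewrite mulr0.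
      have : (n i < C)%N by move/forallP: Hs => /(_ i0); lia.
      by move=> ->; rewrite mul1r.
    have HN : (nshort n)%:R != 0 :> R by rewrite pnatr_eq0 -lt0n.
    by rewrite sumr_const -[RHS](divfK HN) mulr_natr.
  + rewrite negb_exists => /forallP Hall.
    have -> : occ n ord_max = k.
      rewrite /occ; have := cardsC [set i | n i == ord_max]; rewrite card_ord.
      suff -> : ~: [set i | n i == ord_max] = set0 by rewrite cards0; lia.
      apply/setP => i; rewrite !inE -val_eqE /=; have := Hall i; have := ltn_ord (n i); lia.
    rewrite ltnn mul0r big1 // => i _; have := Hall i; rewrite /Arate.
    by move/negbTE => ->; rewrite andbF mulr0.
- rewrite -mulr_suml sumb; congr (_%:R * _).
  have := cardsC [set i | n i == ord0]; rewrite card_ord /occ.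
  suff -> : ~: [set i | n i == ord0] = [set i | (0 < n i)%N] by lia.
  by apply/setP => i; rewrite !inE lt0n.
Qed.

Definition S (k C : nat) (f : 'I_C.+1 -> int) (n : state k C) : bool :=
  [forall j, (occ n j)%:Z == f j].

Lemma zetaE (R : numFieldType) (k C : nat) (eps : state k C -> R) f :
  zeta eps f = \sum_n eps n * (S f n)%:R.
Proof.
rewrite /zeta big_mkcond /=; apply: eq_bigr => n _; rewrite /S.
by case: [forall j, _]; rewrite ?mulr1 ?mulr0.
Qed.

Lemma S_upd (k C : nat) f (n : state k C) i w :
  S f (upd n i w) = S (fun l => f l + (n i == l)%:R - (w == l)%:R) n.
Proof.
apply: eq_forallb => l; have := occ_upd n i w l.
by case: (n i == l); case: (w == l) => /= H; apply/eqP/eqP; lia.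
Qed.

Lemma sum_ind_filter (R : nzRingType) (T : finType) (P : pred T) (x : T) (b : bool) (c : R) :
  \sum_(y | P y) (b && (y == x))%:R * c = (b && P x)%:R * c.
Proof.
rewrite big_mkcond (bigD1 x) //= eqxx andbT big1 ?addr0.
  by case: (P x); case: b; rewrite ?mul0r.
by move=> y /negbTE ->; rewrite andbF mul0r; case: (P y).
Qed.

Lemma inflow (R : numFieldType) (k C : nat) (mu lam : R) f (n' : state k C) :
  \sum_(n | S f n) rate mu lam n' n =
  \sum_i (((n' i < C)%N && S f (inc n' i))%:R * Arate mu n' i
        + ((0 < n' i)%N && S f (dec n' i))%:R * lam).
Proof.
under eq_bigr do rewrite rateE.
rewrite exchange_big /=; apply: eq_bigr => i _.
by rewrite big_split /= !sum_ind_filter.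
Qed.

Lemma regroup (R : numFieldType) (k C : nat) (n : state k C) (G : 'I_C.+1 -> R) :
  \sum_i G (n i) = \sum_v (occ n v)%:R * G v.
Proof.
have -> : \sum_v (occ n v)%:R * G v = \sum_v \sum_i (n i == v)%:R * G v.
  apply: eq_bigr => v _; rewrite -mulr_suml sumb.
  by congr (_%:R * _).
rewrite exchange_big /=; apply: eq_bigr => i _.
under eq_bigr do rewrite eq_sym.
by rewrite sum_ind1.
Qed.

Lemma sum_eqv (C a : nat) : (a < C.+1)%N ->
  (\sum_(l < C.+1) ((nat_of_ord l == a) : nat))%N = 1%N.
Proof.
move=> Ha; rewrite (bigD1 (inord a)) //= inordK // eqxx big1 // => l.
by rewrite -val_eqE /= inordK // => /negbTE ->.
Qed.

Definition Dv (C : nat) (m : 'I_C.+1 -> nat) (v : 'I_C.+1) :=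
  fun j : 'I_C.+1 => (m j)%:Z + (j == v)%:R - (val j == (val v).-1)%:R.

Lemma dep (R : numFieldType) (k C : nat) (lam : R) (m : 'I_C.+1 -> nat) (n' : state k C) :
  \sum_i ((0 < n' i)%N && S (fun j => (m j)%:Z) (dec n' i))%:R * lam
  = \sum_(v | v != ord0) (m v).+1%:R * (S (Dv m v) n')%:R * lam.
Proof.
have step1 : forall i, ((0 < n' i)%N && S (fun j => (m j)%:Z) (dec n' i))
                       = ((0 < n' i)%N && S (Dv m (n' i)) n').
  move=> i; rewrite /dec S_upd; case: (ltnP 0 (n' i)) => //= Hi.
  apply: eq_forallb => l.
  have -> : (inord (n' i).-1 == l) = (val l == (n' i).-1).
    rewrite eq_sym -val_eqE /= inordK //; have := ltn_ord (n' i); lia.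
  by rewrite [n' i == l]eq_sym.
under eq_bigr do rewrite step1.
rewrite (regroup n' (fun v => ((0 < v)%N && S (Dv m v) n')%:R * lam)).
rewrite [RHS]big_mkcond /=; apply: eq_bigr => v _.
case: (eqVneq v ord0) => [->|nz] /=; first by rewrite mul0r mulr0.
have Hv : (0 < v)%N by rewrite lt0n.
rewrite Hv /=; case HS: (S (Dv m v) n'); last by rewrite /= !(mul0r, mulr0).
move/forallP: HS => /(_ v) /eqP; rewrite /Dv eqxx.
have -> : (val v == (val v).-1) = false by rewrite /=; apply/negbTE/eqP; lia.
move=> /= H; rewrite mulrA; congr (_ * _ * _); congr _%:R; lia.
Qed.

Definition Aj (C : nat) (m : 'I_C.+1 -> nat) (v : nat) :=
  fun l : 'I_C.+1 => (m l)%:Z + (val l == v)%:R - (val l == v.+1)%:R.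

Definition Mj (C : nat) (m : 'I_C.+1 -> nat) (j : 'I_C) :=
  fun l : 'I_C.+1 => if (val l < j)%N then 0
                     else if val l == val j then (m l)%:Z + 1
                     else if val l == j.+1 then (m l)%:Z - 1
                     else (m l)%:Z.

Lemma Aj_exists (k C : nat) (m : 'I_C.+1 -> nat) (n' : state k C) (v : nat) :
  (v < C.+1)%N -> S (Aj m v) n' -> exists i, nat_of_ord (n' i) = v.
Proof.
move=> Hv /forallP /(_ (inord v)) /eqP; rewrite /Aj /= inordK // eqxx /=.
have -> : (v == v.+1) = false by apply/negbTE/eqP; lia.
move=> H; have : (0 < occ n' (inord v))%N by lia.
move/card_gt0P => [i]; rewrite inE -val_eqE /= inordK // => /eqP Hi.
by exists i.
Qed.

Lemma K (k C : nat) (m : 'I_C.+1 -> nat) (n' : state k C)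
    (Hm : (\sum_j m j)%N = k) (j : 'I_C) :
  S (Mj m j) n' = [forall i, (j <= n' i)%N] && S (Aj m j) n'.
Proof.
apply/idP/idP.
- move/forallP => HS.
  have Hlow : forall l : 'I_C.+1, (l < j)%N -> occ n' l = 0%N.
    by move=> l Hl; have := HS l; rewrite /Mj /= Hl => /eqP; lia.
  have Hall : forall i, (j <= n' i)%N.
    move=> i; rewrite leqNgt; apply/negP => Hi; have := Hlow (n' i) Hi.
    have : (0 < occ n' (n' i))%N by apply/card_gt0P; exists i; rewrite inE.
    lia.
  have Hsum : forall l : 'I_C.+1, (occ n' l + (nat_of_ord l == j.+1)
       = (if (l < j)%N then 0 else m l) + (nat_of_ord l == j))%N.
    move=> l; have := HS l; rewrite /Mj /=.
    case: (ltnP l j) => Hl; case: (eqVneq (nat_of_ord l) j) => e1;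
      case: (eqVneq (nat_of_ord l) j.+1) => e2 /= /eqP; lia.
  have Hm0 : forall l : 'I_C.+1, (l < j)%N -> m l = 0%N.
    have H1 : (\sum_(l < C.+1) (occ n' l + (nat_of_ord l == j.+1))
             = \sum_(l < C.+1) ((if (l < j)%N then 0 else m l) + (nat_of_ord l == j)))%N.
      by apply: eq_bigr => l _; exact: Hsum l.
    rewrite !big_split /= occ_sum !sum_eqv in H1; last 2 first.
    + by have := ltn_ord j; lia.
    + by have := ltn_ord j; lia.
    have H2 : (\sum_(l < C.+1) m l = \sum_(l < C.+1) (if (l < j)%N then 0 else m l)
                + \sum_(l < C.+1) (if (l < j)%N then m l else 0))%N.
      by rewrite -big_split /=; apply: eq_bigr => l _; case: (l < j)%N; rewrite ?addn0.
    have H3 : (\sum_(l < C.+1) (if (l < j)%N then m l else 0) == 0)%N.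
      move: H1; rewrite -Hm H2 !addn1 => -[] /eqP; rewrite -[X in _ == X]addn0 eqn_add2l.
      by [].
    move=> l Hl; move: H3; rewrite sum_nat_eq0 => /forallP /(_ l) /=.
    by rewrite Hl => /eqP.
  rewrite (introT forallP Hall) /=; apply/forallP => l; have := HS l; rewrite /Mj /Aj /=.
  case: (ltnP l j) => Hl; [rewrite Hm0 // |];
    case: (eqVneq (nat_of_ord l) j) => e1;
      case: (eqVneq (nat_of_ord l) j.+1) => e2 /= /eqP H; apply/eqP; lia.
- case/andP => /forallP Hall /forallP HA; apply/forallP => l.
  have Hlow : (l < j)%N -> occ n' l = 0%N.
    move=> Hl; apply/eqP; rewrite cards_eq0; apply/eqP/setP => i.
    rewrite !inE -val_eqE; apply/negbTE/eqP => /=; have := Hall i; lia.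
  have := HA l; rewrite /Mj /Aj /=.
  case: (ltnP l j) => Hl;
    case: (eqVneq (nat_of_ord l) j) => e1;
      case: (eqVneq (nat_of_ord l) j.+1) => e2 /= /eqP H; apply/eqP;
      try (have := Hlow Hl); lia.
Qed.

Lemma arr (R : numFieldType) (k C : nat) (mu : R) (m : 'I_C.+1 -> nat) (n' : state k C)
    (Hm : (\sum_j m j)%N = k) :
  \sum_i ((n' i < C)%N && S (fun j => (m j)%:Z) (inc n' i))%:R * Arate mu n' i
  = mu * \sum_(j < C) (S (Mj m j) n')%:R.
Proof.
have step1 : forall i, ((n' i < C)%N && S (fun j => (m j)%:Z) (inc n' i))
                       = ((n' i < C)%N && S (Aj m (n' i)) n').
  move=> i; rewrite /inc S_upd; case: (ltnP (n' i) C) => //= Hi.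
  apply: eq_forallb => l.
  have -> : (inord (n' i).+1 == l) = (val l == (n' i).+1).
    by rewrite eq_sym -val_eqE /= inordK.
  by rewrite [n' i == l]eq_sym.
under eq_bigr do rewrite step1.
under [in RHS]eq_bigr => j _ do rewrite K //.
case: (boolP [exists i, (n' i < C)%N]) => [/existsP [i0 Hi0]|].
- have [i1 Hi1] := exists_min n' i0.
  have Hv : (n' i1 < C)%N by have := Hi1 i0; lia.
  have Hsh : (0 < nshort n')%N.
    apply/card_gt0P; exists i1; rewrite inE; exact/forallP.
  have HN : (nshort n')%:R != 0 :> R by rewrite pnatr_eq0 -lt0n.
  transitivity (\sum_(i in [set i | shortest n' i])
                  (S (Aj m (n' i1)) n')%:R * (mu / (nshort n')%:R)).
    rewrite [RHS]big_mkcond; apply: eq_bigr => i _; rewrite inE /Arate.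
    case: (boolP (shortest n' i)) => Hs /=; last by rewrite !mulr0.
    have Hei : nat_of_ord (n' i) = nat_of_ord (n' i1).
      by move/forallP: Hs => /(_ i1); have := Hi1 i; lia.
    by rewrite Hei Hv.
  rewrite sumr_const -mulrnAr -[(mu / _) *+ _]mulr_natr divfK // mulrC.
  congr (_ * _).
  rewrite (bigD1 (Ordinal Hv)) //= big1 ?addr0.
    have -> : [forall i, (n' i1 <= n' i)%N] by apply/forallP.
    by [].
  move=> j Hj; case: (boolP [forall i, (j <= n' i)%N]) => //= /forallP Hall.
  case HS: (S (Aj m j) n') => //.
  have [i Hi] := Aj_exists (ltnW (ltn_ord j)) HS.
  move/eqP: Hj; case; apply/val_inj => /=.
  have := Hall i1; have := Hi1 i; lia.
- rewrite negb_exists => /forallP Hall.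
  rewrite [in RHS]big1 ?mulr0.
    by rewrite big1 // => i _; have := Hall i; move/negbTE => ->; rewrite mul0r.
  move=> j _; case: [forall i, _] => //=.
  case HS: (S (Aj m j) n') => //.
  have [i Hi] := Aj_exists (ltnW (ltn_ord j)) HS.
  by have := Hall i; have := ltn_ord j; lia.
Qed.

Theorem lemma4 (R : realFieldType) (k C : nat) (mu lam : R)
    (eps : state k C -> R) :
  0 < mu -> 0 < lam -> jsq_stationary mu lam eps ->
  forall m : 'I_C.+1 -> nat, (\sum_(j < C.+1) m j)%N = k ->
  (((m ord_max < k)%N)%:R * (mu / lam) + (k - m ord0)%:R)
      * zeta eps (fun j => (m j)%:Z)
  = \sum_(i < C.+1 | i != ord0)
        (m i).+1%:R *
        zeta eps (fun j => (m j)%:Z + (j == i)%:R - (val j == (val i).-1)%:R)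
    + (mu / lam) *
      \sum_(j < C)
        zeta eps (fun l => if (val l < j)%N then 0
                           else if val l == val j then (m l)%:Z + 1
                           else if val l == j.+1 then (m l)%:Z - 1
                           else (m l)%:Z).
Proof.
move=> Hmu Hlam [Hpos [Hsum1 Hbal]] m Hm.
have Hl0 : lam != 0 by rewrite gt_eqF.
set f := fun j : 'I_C.+1 => (m j)%:Z.
pose T (n' : state k C) := mu * \sum_(j < C) (S (Mj m j) n')%:R
     + \sum_(v | v != ord0) (m v).+1%:R * (S (Dv m v) n')%:R * lam.
apply: (mulfI Hl0); transitivity (\sum_n' eps n' * T n').
- change (zeta eps f) with (\sum_(n | S f n) eps n).
  have E1 : forall x y : R, lam * (x * (mu / lam) + y) = x * mu + y * lam.
    move=> x y; rewrite mulrDr mulrCA [lam * (mu / lam)]mulrCA divff // mulr1.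
    by rewrite [lam * y]mulrC.
  rewrite (mulrA lam) E1 mulrC.
  rewrite mulr_suml.
  transitivity (\sum_(n | S f n) \sum_n' eps n' * rate mu lam n' n).
    apply: eq_bigr => n Hn.
    have Hocc : forall l, occ n l = m l.
      by move=> l; move/forallP: Hn => /(_ l) /eqP; rewrite /f; lia.
    rewrite -(sum_neq (x := n)); last by rewrite rate_self mulr0.
    rewrite -Hbal (sum_neq (x := n)); last by rewrite rate_self.
    by rewrite outrate !Hocc mulrC.
  rewrite exchange_big /=; apply: eq_bigr => n' _.
  rewrite -mulr_sumr inflow big_split /= arr // dep //.
- rewrite /T.
  under eq_bigr do rewrite mulrDr.
  rewrite big_split /= mulrDr addrC; congr (_ + _).
  + under eq_bigr do rewrite mulr_sumr.
    rewrite exchange_big /= mulr_sumr; apply: eq_bigr => v _.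
    rewrite zetaE !mulr_sumr; apply: eq_bigr => n' _.
    by ring.
  + rewrite mulrA [lam * (mu / lam)]mulrC divfK // mulr_sumr.
    under eq_bigr do rewrite !mulr_sumr.
    rewrite exchange_big /=; apply: eq_bigr => j _.
    rewrite zetaE mulr_sumr; apply: eq_bigr => n' _.
    by ring.
Qed.
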